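(* Let $n$ be even, $1\le\eta\le n/2$, and $p\ge1$ an integer. On the fermionic Fock space on $n$ spin orbitals define $$T=\sum_{j,k=0}^{n-1}A_j^\dagger A_k,\qquad V=\sum_{x,y=0}^{\frac n2-1}N_xN_y,$$ and let $|a\rangle$ be the basis state in which modes $1,\dots,\eta-1$ and mode $n/2$ are occupied and all others empty, and $|b\rangle$ the basis state in which modes $0,1,\dots,\eta-1$ are occupied and all others empty. Set $|\psi_\eta\rangle=\frac{1}{\sqrt2}(|a\rangle+i|b\rangle)$ and $|\phi_\eta\rangle=\frac1{\sqrt2}(|a\rangle+|b\rangle)$. Writing $D_p=[V,\ldots[V,T]]$ with $p$ copies of $V$, we have $$|\langle\psi_\eta|D_p|\psi_\eta\rangle|\ (p\text{ odd}),\qquad|\langle\phi_\eta|D_p|\phi_\eta\rangle|\ (p\text{ even})\quad=2^p\eta^p+O(\eta^{p-1}),$$ with the implied constant depending only on $p$.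
   Context: Fermionic Fock space on $n$ spin orbitals (modes labeled $0,\dots,n-1$): the $2^n$-dimensional Hilbert space with orthonormal basis $|c_0,c_1,\dots,c_{n-1}\rangle$, $c_j\in\{0,1\}$, where $c_j=1$ means mode $j$ is occupied. Creation operators: $A_j^\dagger|\dots,0_j,\dots\rangle=(-1)^{\sum_{k<j}c_k}|\dots,1_j,\dots\rangle$, $A_j^\dagger|\dots,1_j,\dots\rangle=0$; annihilation operators $A_j=(A_j^\dagger)^\dagger$; $N_j=A_j^\dagger A_j$. *)

(* Defs.v *)
From HB Require Import structures.
From mathcomp Require Import all_boot all_order all_algebra all_field.
Set Implicit Arguments. Unset Strict Implicit. Unset Printing Implicit Defensive.
Import Order.TTheory GRing.Theory Num.Theory.
Local Open Scope ring_scope.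

(* Occupation-number configurations |c_0,...,c_{n-1}> : the basis of Fock space. *)
Definition cfg (n : nat) := {ffun 'I_n -> bool}.

(* States: coefficient vectors on the basis; operators: matrices (kernels)
   indexed by basis configurations, O c d = <c|O|d>. *)
Definition state (n : nat) := cfg n -> algC.
Definition op (n : nat) := cfg n -> cfg n -> algC.

Definition opmul n (A B : op n) : op n := fun c d => \sum_(e : cfg n) A c e * B e d.
Definition opadj n (A : op n) : op n := fun c d => (A d c)^*.
Definition comm n (A B : op n) : op n := fun c d => opmul A B c d - opmul B A c d.

Definition jw_sign n (c : cfg n) (j : 'I_n) : algC :=
  (-1) ^+ #|[set k : 'I_n | (k < j)%N && c k]|.

Definition cre n (j : 'I_n) : op n := fun c d =>
  if ~~ d j && (c == [ffun k => if k == j then true else d k])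
  then jw_sign d j else 0.

Definition ann n (j : 'I_n) : op n := opadj (cre j).
Definition numop n (j : 'I_n) : op n := opmul (cre j) (ann j).

Definition Top (n : nat) : op n := fun c d =>
  \sum_(j < n) \sum_(k < n) opmul (cre j) (ann k) c d.

Definition Vop (n : nat) : op n := fun c d =>
  \sum_(x < n | (x < n./2)%N) \sum_(y < n | (y < n./2)%N) opmul (numop x) (numop y) c d.

Definition Dop (n p : nat) : op n := iter p (comm (@Vop n)) (@Top n).

Definition expect n (psi : state n) (O : op n) : algC :=
  \sum_(c : cfg n) \sum_(d : cfg n) (psi c)^* * O c d * psi d.

Definition ket n (c0 : cfg n) : state n := fun c => (c == c0)%:R.

Definition cfg_a n (eta : nat) : cfg n :=
  [ffun k : 'I_n => ((1 <= k)%N && (k < eta)%N) || (nat_of_ord k == n./2)].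
Definition cfg_b n (eta : nat) : cfg n := [ffun k : 'I_n => (k < eta)%N].

Definition psi_eta n (eta : nat) : state n := fun c =>
  (sqrtC 2)^-1 * (ket (@cfg_a n eta) c + 'i * ket (@cfg_b n eta) c).
Definition phi_eta n (eta : nat) : state n := fun c =>
  (sqrtC 2)^-1 * (ket (@cfg_a n eta) c + ket (@cfg_b n eta) c).
Arguments Top n : clear implicits.
Arguments Vop n : clear implicits.
Arguments Dop n p : clear implicits.
Arguments cfg_a n eta : clear implicits.
Arguments cfg_b n eta : clear implicits.
Arguments psi_eta n eta : clear implicits.
Arguments phi_eta n eta : clear implicits.

(* Main.v *)
Require Import Defs.
From HB Require Import structures.
From mathcomp Require Import all_boot all_order all_algebra all_field.
From mathcomp Require Import ring zify.
Import Order.TTheory GRing.Theory Num.Theory.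
Local Open Scope ring_scope.

Definition unset n (c : cfg n) (j : 'I_n) : cfg n :=
  [ffun k => if k == j then false else c k].
Arguments unset {n}.

Lemma cre_alt n (j : 'I_n) c e :
  cre j c e = if c j && (e == unset c j) then jw_sign e j else 0.
Proof.
rewrite /cre; congr (if _ then _ else _).
apply/idP/idP.
- case/andP => ej /eqP ->; rewrite ffunE eqxx /=; apply/eqP/ffunP => k; rewrite !ffunE.
  by case: eqP => [->|] //; rewrite (negbTE ej).
- case/andP => cj /eqP ->; rewrite !ffunE eqxx /=.
  apply/eqP/ffunP => k; rewrite !ffunE.
  by case: eqP => [->|].
Qed.

Lemma sum_pick n (u : cfg n) (F : cfg n -> algC) :
  \sum_e (if e == u then F e else 0) = F u.
Proof. by rewrite -big_mkcond big_pred1_eq. Qed.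

Lemma jw_conj n (e : cfg n) j : (jw_sign e j)^* = jw_sign e j.
Proof. by rewrite /jw_sign rmorphXn rmorphN1. Qed.

Lemma jw_norm n (e : cfg n) j : `|jw_sign e j| = 1.
Proof. by rewrite /jw_sign normrX normrN1 expr1n. Qed.

Lemma opmul_ca n (j k : 'I_n) c d : opmul (cre j) (ann k) c d =
  if c j && d k && (unset c j == unset d k)
  then jw_sign (unset c j) j * jw_sign (unset d k) k else 0.
Proof.
rewrite /opmul /ann /opadj.
under eq_bigr => e _ do rewrite cre_alt [cre k d e]cre_alt.
case cj: (c j) => /=; last by rewrite big1 // => e _; rewrite mul0r.
rewrite (eq_bigr (fun e => if e == unset c j then jw_sign e j *
   (if d k && (e == unset d k) then jw_sign e k else 0)^* else 0)); last first.
  by move=> e _; case: ifP => _ //; rewrite mul0r.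
rewrite sum_pick.
case dk: (d k) => /=; last by rewrite rmorph0 mulr0.
case: eqP => [E|_]; last by rewrite rmorph0 mulr0.
by rewrite jw_conj E.
Qed.

Lemma numopE n (x : 'I_n) c d : numop x c d = (c == d)%:R * (c x)%:R.
Proof.
rewrite /numop opmul_ca.
case cx: (c x); case dx: (d x) => /=; rewrite ?mulr0 ?mulr1 //.
- have -> : (unset c x == unset d x) = (c == d).
    apply/eqP/eqP => [H|->//]; apply/ffunP => k; have := congr1 (fun f : cfg n => f k) H.
    by rewrite !ffunE; case: eqP => [->|] //; rewrite cx dx.
  case: eqP => [->|_] //.
  by rewrite -{2}jw_conj -normCK jw_norm expr1n.
- by case: eqP => // E; rewrite E dx in cx.
Qed.

Lemma sum_eql n (c : cfg n) (F : cfg n -> algC) : \sum_e (c == e)%:R * F e = F c.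
Proof.
rewrite (bigD1 c) //= eqxx mul1r big1 ?addr0 // => e /negbTE ne.
by rewrite eq_sym ne mul0r.
Qed.

Lemma sum_eqr n (d : cfg n) (F : cfg n -> algC) : \sum_e F e * (e == d)%:R = F d.
Proof.
rewrite (bigD1 d) //= eqxx mulr1 big1 ?addr0 // => e /negbTE ne.
by rewrite ne mulr0.
Qed.

Lemma sum_ketl n (d : cfg n) (F : cfg n -> algC) : \sum_e (e == d)%:R * F e = F d.
Proof.
rewrite (bigD1 d) //= eqxx mul1r big1 ?addr0 // => e /negbTE ne.
by rewrite ne mul0r.
Qed.

Definition vv n (c : cfg n) : algC :=
  \sum_(x < n | (x < n./2)%N) \sum_(y < n | (y < n./2)%N) (c x)%:R * (c y)%:R.
Arguments vv {n}.

Lemma VopE n c d : Vop n c d = (c == d)%:R * vv c.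
Proof.
rewrite /Vop /vv big_distrr; apply: eq_bigr => x _; rewrite big_distrr.
apply: eq_bigr => y _.
rewrite /opmul; under eq_bigr => e _ do rewrite numopE -mulrA.
by rewrite sum_eql numopE mulrCA.
Qed.

Lemma commVE n (X : op n) c d : comm (Vop n) X c d = (vv c - vv d) * X c d.
Proof.
rewrite /comm /opmul.
have h1 : \sum_e Vop n c e * X e d = vv c * X c d.
  by under eq_bigr => e _ do rewrite VopE -mulrA; rewrite sum_eql.
have h2 : \sum_e X c e * Vop n e d = X c d * vv d.
  by under eq_bigr => e _ do rewrite VopE mulrCA mulrC; rewrite sum_eqr.
by rewrite h1 h2; ring.
Qed.

Lemma DopE n p c d : Dop n p c d = (vv c - vv d) ^+ p * Top n c d.
Proof.
rewrite /Dop; elim: p c d => [|p IH] c d; first by rewrite expr0 mul1r.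
by rewrite iterS commVE IH exprS mulrA.
Qed.

Lemma expect2 n (psi : state n) (a b : cfg n) (s bt : algC) (O : op n) :
 (forall c, psi c = s * (ket a c + bt * ket b c)) ->
 expect psi O = s^* * s * (O a a + bt * O a b + bt^* * O b a + bt^* * bt * O b b).
Proof.
move=> hpsi; rewrite /expect.
have inner : forall c, \sum_d O c d * psi d = s * O c a + s * bt * O c b.
  move=> c; under eq_bigr => d _ do rewrite hpsi.
  rewrite (eq_bigr (fun d => s * (O c d * ket a d) + s * bt * (O c d * ket b d))); last by move=> d _; ring.
  by rewrite big_split /= -!mulr_sumr /ket !sum_eqr.
transitivity (\sum_c (psi c)^* * \sum_d O c d * psi d).
  by apply: eq_bigr => c _; rewrite mulr_sumr; apply: eq_bigr => d _; rewrite mulrA.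
rewrite (eq_bigr (fun c => s^* * ((c == a)%:R * (s * O c a + s * bt * O c b)) +
   s^* * bt^* * ((c == b)%:R * (s * O c a + s * bt * O c b)))); last first.
  move=> c _; by rewrite inner hpsi /ket rmorphM rmorphD rmorphM !rmorph_nat; ring.
rewrite big_split /= -!mulr_sumr !sum_ketl; ring.
Qed.

Lemma cond_ab n eta (hm : (n./2 < n)%N) (h0 : (0 < n)%N) :
  (1 <= eta)%N -> (eta <= n./2)%N -> forall j k : 'I_n,
  cfg_a n eta j && cfg_b n eta k && (unset (cfg_a n eta) j == unset (cfg_b n eta) k)
  = (j == Ordinal hm) && (k == Ordinal h0).
Proof.
move=> h1 h2 j k; apply/idP/idP.
- case/andP => /andP [aj bk] /eqP H.
  have H0 := congr1 (fun f : cfg n => f (Ordinal h0)) H.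
  have Hm := congr1 (fun f : cfg n => f (Ordinal hm)) H.
  move: H0 Hm aj bk; rewrite !ffunE /=; clear H.
  case: j => j hj; case: k => k hk.
  rewrite /eq_op /=.
  move: (n./2) h1 h2 => m h1 h2.
  case: (0 =P j) => ?; case: (0 =P k) => ?; case: (m =P j) => ?; case: (m =P k) => ?;
   subst => //=; rewrite ?eqxx ?orbT /=; lia.
- case/andP => /eqP -> /eqP -> /=; rewrite !ffunE /= eqxx /= h1 /= andbT.
  rewrite orbT /=; apply/eqP/ffunP => i; rewrite !ffunE.
  case: i => i hi; rewrite /eq_op /=.
  move: (n./2) h1 h2 => m h1 h2.
  case: (i =P m) => ?; case: (i =P 0) => ?; subst => //=; lia.
Qed.

Lemma sum2_pick n (u v : 'I_n) (F : 'I_n -> 'I_n -> algC) :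
  \sum_j \sum_k (if (j == u) && (k == v) then F j k else 0) = F u v.
Proof.
rewrite (bigD1 u) //= eqxx /= -big_mkcond big_pred1_eq big1 ?addr0 // => j /negbTE ->.
by apply: big1 => k _.
Qed.

Lemma count_lt n k : \sum_(x < n) ((x < k)%N)%:R = (minn k n)%:R :> algC.
Proof.
elim: n => [|n IH]; first by rewrite big_ord0 minn0.
rewrite big_ord_recr /= IH -natrD; congr (_%:R).
case: (ltnP n k) => h /=; lia.
Qed.

Lemma leq_half n : (n./2 <= n)%N.
Proof. rewrite leq_half_double -addnn; lia. Qed.

Definition LL n (c : cfg n) : algC := \sum_(x < n | (x < n./2)%N) (c x)%:R.
Arguments LL {n}.

Lemma vvLL n (c : cfg n) : vv c = LL c ^+ 2.
Proof.
rewrite /vv /LL expr2 mulr_suml; apply: eq_bigr => x _; by rewrite mulr_sumr.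
Qed.

Lemma LL_b n eta : (eta <= n./2)%N -> LL (cfg_b n eta) = eta%:R.
Proof.
move=> h2; rewrite /LL big_mkcond /=.
rewrite (eq_bigr (fun x : 'I_n => ((x < eta)%N)%:R)); last first.
  move=> x _; rewrite ffunE; case: ltnP => h //.
  by rewrite ltnNge (leq_trans h2 h).
rewrite count_lt; congr (_%:R); have := leq_half n; lia.
Qed.

Lemma LL_a n eta : (1 <= eta)%N -> (eta <= n./2)%N -> LL (cfg_a n eta) = eta%:R - 1.
Proof.
move=> h1 h2; rewrite /LL big_mkcond /=.
rewrite (eq_bigr (fun x : 'I_n => ((x < eta)%N)%:R - ((x < 1)%N)%:R)); last first.
  move=> [x hx] _; rewrite ffunE /=.
  case: ltnP => h.
    rewrite (ltn_eqF h) orbF.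
    by case: x {hx h} => [|x] /=; rewrite ?h1 ?subrr ?subr0.
  rewrite ltnNge (leq_trans h2 h) /= ltnNge (leq_trans h1 (leq_trans h2 h)) /=.
  by rewrite subrr.
rewrite sumrB !count_lt; have := leq_half n.
have -> : minn eta n = eta by lia.
have -> : minn 1 n = 1%N by lia.
done.
Qed.

Lemma bern x q : ((x+1)^(q.+1) <= x^(q.+1) + q.+1 * (x+1)^q)%N.
Proof.
elim: q => [|q IH]; first by rewrite !expn1 expn0 muln1.
have hA : (x^(q.+1) <= (x+1)^(q.+1))%N by rewrite leq_exp2r // leq_addr.
have hBC : ((x+1)^(q.+1) = (x+1)*(x+1)^q)%N by rewrite expnS.
have hM := leq_mul (leqnn (x+1)%N) IH.
rewrite (expnS (x+1)%N q.+1) (expnS x q.+1).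
move: IH hA hBC hM; set A := (x^(q.+1))%N; set B := ((x+1)^(q.+1))%N; set C := ((x+1)^q)%N.
move=> IH hA hBC hM; rewrite hBC in hA hM *; nia.
Qed.

Theorem proposition14 (p : nat) (hp : (1 <= p)%N) :
  exists C : algC, 0 <= C /\
    forall (n eta : nat), ~~ odd n -> (1 <= eta)%N -> (eta <= n./2)%N ->
      `| `| expect (if odd p then psi_eta n eta else phi_eta n eta) (Dop n p) |
         - 2%:R ^+ p * eta%:R ^+ p | <= C * eta%:R ^+ p.-1.
Proof.
exists (p * 2 ^ p.-1)%:R; split; first exact: ler0n.
move=> n eta hn h1 h2.
have E := odd_double_half n; rewrite (negbTE hn) add0n -addnn in E.
have hm : (n./2 < n)%N by lia.
have h0 : (0 < n)%N by lia.
set a := cfg_a n eta; set b := cfg_b n eta.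
have Tab : Top n a b = jw_sign (unset a (Ordinal hm)) (Ordinal hm) *
                       jw_sign (unset b (Ordinal h0)) (Ordinal h0).
  rewrite /Top; under eq_bigr => j _ do under eq_bigr => k _ do
    rewrite opmul_ca (@cond_ab n eta hm h0 h1 h2).
  by rewrite sum2_pick.
have Tba : Top n b a = jw_sign (unset b (Ordinal h0)) (Ordinal h0) *
                       jw_sign (unset a (Ordinal hm)) (Ordinal hm).
  have cba : forall j k : 'I_n, b j && a k && (unset b j == unset a k)
       = (j == Ordinal h0) && (k == Ordinal hm).
    by move=> j k; rewrite [b j && a k]andbC eq_sym (@cond_ab n eta hm h0 h1 h2) andbC.
  rewrite /Top; under eq_bigr => j _ do under eq_bigr => k _ do
    rewrite opmul_ca cba.
  by rewrite sum2_pick.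
set t := Top n a b.
have tn : `|t| = 1 by rewrite /t Tab normrM !jw_norm mulr1.
have Tba' : Top n b a = t by rewrite Tba /t Tab mulrC.
set w : algC := ((2 * eta - 1)%N)%:R.
have vab : vv a - vv b = - w.
  rewrite !vvLL LL_a // LL_b // /w natrB ?natrM; last by lia.
  ring.
have vba : vv b - vv a = w by rewrite -opprB vab opprK.
have hp0 : (p == 0)%N = false by lia.
have Daa : Dop n p a a = 0 by rewrite DopE subrr expr0n hp0 mul0r.
have Dbb : Dop n p b b = 0 by rewrite DopE subrr expr0n hp0 mul0r.
have Dab : Dop n p a b = (-w)^+p * t by rewrite DopE vab.
have Dba : Dop n p b a = w^+p * t by rewrite DopE vba Tba'.
have s2 : ((sqrtC 2)^-1)^* * (sqrtC 2)^-1 = 2^-1 :> algC.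
  by rewrite geC0_conj ?invr_ge0 ?sqrtC_ge0 ?ler0n // -expr2 exprVn sqrtCK.
have key : `|expect (if odd p then psi_eta n eta else phi_eta n eta) (Dop n p)| = w ^+ p.
  case: ifP => hodd.
    rewrite (@expect2 n _ a b ((sqrtC 2)^-1) 'i); last by [].
    rewrite s2 Daa Dab Dba Dbb exprNn -signr_odd hodd expr1 conjCi.
    have -> : 2^-1 * (0 + 'i * (-1 * w^+p * t) + -'i * (w^+p * t) + -'i * 'i * 0)
       = - 'i * (w^+p * t) :> algC.
      field; by [].
    by rewrite mulNr normrN normrM normCi mul1r normrM tn mulr1 /w -natrX normr_nat.
  rewrite (@expect2 n _ a b ((sqrtC 2)^-1) 1); last by move=> c; rewrite mul1r.
  rewrite s2 Daa Dab Dba Dbb exprNn -signr_odd hodd expr0 rmorph1.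
  have -> : 2^-1 * (0 + 1 * (1 * w^+p * t) + 1 * (w^+p * t) + 1 * 1 * 0)
       = (w^+p * t) :> algC.
    field; by [].
  by rewrite normrM tn mulr1 /w -natrX normr_nat.
rewrite key /w -!natrX -!natrM.
have hAB : ((2 * eta - 1) ^ p <= 2 ^ p * eta ^ p)%N.
  by rewrite -expnMn leq_exp2r // leq_subr.
rewrite distrC -natrB // normr_nat ler_nat.
case: p hp hAB {hp0 Daa Dbb Dab Dba key} => // q _ _ /=.
rewrite -mulnA -expnMn leq_subLR.
have := bern (2 * eta - 1) q.
have e2 : (2 * eta - 1 + 1 = 2 * eta)%N by clear -h1; lia.
rewrite e2 [((2 * eta) ^ q)%N]expnMn; exact: id.
Qed.
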